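(* Under the standing setting and assumptions (A1)–(A3) described in the context, assume $\mathcal A^\infty\cap\ker(\pi)=\{0\}$ (absence of scalable good deals). Then $\mathcal R(X)\neq\emptyset$ for every $X\in\mathcal X$.
   Context: Let $\mathcal X$ be a Hausdorff, first countable, locally convex topological vector space over $\mathbb R$, partially ordered by a partial order $\geq$ with positive cone $\mathcal X_+=\{X\in\mathcal X: X\geq 0\}$. Let $\mathcal M\subset\mathcal X$ be a vector subspace with $1<\dim\mathcal M<\infty$, carrying the relative topology, and let $\pi:\mathcal M\to\mathbb R$ be linear with $\ker(\pi)=\{Z\in\mathcal M:\pi(Z)=0\}$. Standing assumptions: (A1) there is $U\in\mathcal M\cap\mathcal X_+$ with $\pi(U)=1$; (A2) $\mathcal A\subsetneq\mathcal X$ is closed, contains $0$, and satisfies $\mathcal A+\mathcal X_+\subset\mathcal A$; (A3) the map $\rho(X)=\inf\{\pi(Z): Z\in\mathcal M,\ X+Z\in\mathcal A\}$ is finitely valued and continuous on $\mathcal X$. The optimal payoff map is $\mathcal R(X)=\{Z\in\mathcal M: X+Z\in\mathcal A,\ \pi(Z)=\rho(X)\}$. The asymptotic cone is $\mathcal A^\infty=\bigcap_{\varepsilon>0}\mathrm{cl}\{\lambda X:\lambda\in[0,\varepsilon],X\in\mathcal A\}$. *)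

(* Defs.v *)
From HB Require Import structures.
From mathcomp Require Import all_boot all_order all_algebra.
From mathcomp Require Import all_classical all_reals all_analysis.
Set Implicit Arguments. Unset Strict Implicit. Unset Printing Implicit Defensive.
Import Order.TTheory GRing.Theory Num.Theory.
Local Open Scope classical_set_scope.
Local Open Scope ring_scope.

Definition first_countable (T : topologicalType) : Prop :=
  forall x : T, exists B : nat -> set T,
    (forall n, nbhs x (B n)) /\ (forall U, nbhs x U -> exists n, B n `<=` U).

Definition partial_order_ge (E : Type) (ge : E -> E -> Prop) : Prop :=
  (forall x, ge x x) /\ (forall x y, ge x y -> ge y x -> x = y) /\
  (forall x y z, ge x y -> ge y z -> ge x z).

Definition is_subspace (R : numDomainType) (E : lmodType R) (M : set E) : Prop :=
  M 0 /\ (forall (a : R) x y, M x -> M y -> M (a *: x + y)).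

Definition has_dim (R : numDomainType) (E : lmodType R) (M : set E) (n : nat) : Prop :=
  exists b : 'I_n -> E,
    (forall c : 'I_n -> R, \sum_(i < n) c i *: b i = 0 -> forall i, c i = 0) /\
    M = [set \sum_(i < n) c i *: b i | c in [set: 'I_n -> R]].

(* pi : M -> R linear (values of pi outside M are irrelevant) *)
Definition linear_on (R : numDomainType) (E : lmodType R) (M : set E) (pi : E -> R) : Prop :=
  forall (a : R) x y, M x -> M y -> pi (a *: x + y) = a * pi x + pi y.

Definition rho (R : realType) (E : lmodType R) (M : set E) (pi : E -> R)
  (A : set E) (X : E) : \bar R :=
  ereal_inf [set (pi Z)%:E | Z in [set Z | M Z /\ A (X + Z)]].

Definition optR (R : realType) (E : lmodType R) (M : set E) (pi : E -> R)
  (A : set E) (X : E) : set E :=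
  [set Z | M Z /\ A (X + Z) /\ (pi Z)%:E = rho M pi A X].

Definition asym_cone (R : realType) (E : tvsType R) (A : set E) : set E :=
  \bigcap_(e in [set e : R | 0 < e])
     closure [set y : E | exists l : R, exists x : E, 0 <= l <= e /\ A x /\ y = l *: x].

Definition kerM (R : numDomainType) (E : lmodType R) (M : set E) (pi : E -> R) : set E :=
  [set Z | M Z /\ pi Z = 0].

(* Main.v *)
Require Import Defs.
From HB Require Import structures.
From mathcomp Require Import all_boot all_order all_algebra.
From mathcomp Require Import all_classical all_reals all_analysis.
From mathcomp Require Import lra.
Import Order.TTheory GRing.Theory Num.Theory.
Import numFieldTopology.Exports.
Local Open Scope classical_set_scope.
Local Open Scope ring_scope.
Set Implicit Arguments. Unset Strict Implicit. Unset Printing Implicit Defensive.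

Lemma cluster_seq (T : topologicalType) (u : nat -> T) (l : T) (P : nat -> Prop) (B : set T) :
  cluster (u @ \oo) l -> (\forall k \near \oo, P k) -> nbhs l B -> exists k, P k /\ B (u k).
Proof.
move=> cl eP nB.
have H1 : (u @ \oo) (u @` P) by apply: filterS eP => k Pk; exists k.
have [_ [[k Pk <-] Bu]] := cl _ _ H1 nB.
by exists k.
Qed.

Lemma cluster_closed (T U : topologicalType) (u : nat -> T) l (h : T -> U) (S : set U) (P : nat -> Prop):
 cluster (u @ \oo) l -> continuous h -> closed S -> (\forall k \near \oo, P k) ->
 (forall k, P k -> S (h (u k))) -> S (h l).
Proof.
move=> cl hc Scl eP PS; apply: Scl => B nB.
have nB' := hc l B nB.
have [k [Pk Bk]] := @cluster_seq _ u l P (h @^-1` B) cl eP nB'.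
by exists (h (u k)); split => //; apply: PS.
Qed.

Lemma cont_add (T : topologicalType) (E : topologicalZmodType) (f g : T -> E) :
  continuous f -> continuous g -> continuous (fun x => f x + g x).
Proof.
move=> cf cg x.
apply: (@continuous_comp _ _ _ (fun x => (f x, g x)) (fun z : E * E => z.1 + z.2)).
  by apply: cvg_pair; [exact: cf | exact: cg].
exact: add_continuous.
Qed.

Lemma cont_scale (R : realType) (T : topologicalType) (E : topologicalLmodType R)
  (s : T -> R^o) (f : T -> E) :
  continuous s -> continuous f -> continuous (fun x => s x *: f x).
Proof.
move=> cs cf x.
have h1 : {for x, continuous (fun x => (s x, f x))}.
  exact: (cvg_pair (cs x) (cf x)).
have h2 := @scale_continuous R E (s x, f x).
exact: (continuous_comp h1 h2).
Qed.

Lemma cont_sum (T : topologicalType) (E : topologicalZmodType) (I : Type) (s : seq I)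
  (F : I -> T -> E) : (forall i, continuous (F i)) -> continuous (fun x => \sum_(i <- s) F i x).
Proof.
move=> Fc; elim: s => [|i s IH].
  under eq_fun do rewrite big_nil. exact: cst_continuous.
under eq_fun do rewrite big_cons.
exact: cont_add.
Qed.

Lemma bd_ball (R : realType) n (K : R) : bounded_set [set v : 'rV[R]_n | `|v| <= K].
Proof.
rewrite /bounded_near /=.
near=> K0 => v /= hv.
apply: le_trans hv _; near: K0.
by apply: nbhs_pinfty_ge; rewrite num_real.
Unshelve. all: by end_near.
Qed.

Lemma arith (R : realType) (a r b : R) : r <= a -> a < r + b -> b <= 1 -> `|a| <= `|r| + 1.
Proof.
move=> h1 h2 h3.
have h4 : - `|r| <= r by apply: lerNnormlW.
have h5 : r <= `|r| by rewrite ler_norm.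
rewrite ler_norml; apply/andP; split; lra.
Qed.

Theorem mainTheorem8 (R : realType) (E : tvsType R)
  (ge : E -> E -> Prop) (M : set E) (n : nat) (pi : E -> R) (A : set E) :
  hausdorff_space E -> first_countable E ->
  partial_order_ge ge ->
  is_subspace M -> has_dim M n -> (1 < n)%N -> linear_on M pi ->
  (* (A1) *)
  (exists U, M U /\ ge U 0 /\ pi U = 1) ->
  (* (A2) *)
  closed A -> A 0 -> A <> setT ->
  (forall a p, A a -> ge p 0 -> A (a + p)) ->
  (* (A3) *)
  (forall X, rho M pi A X \is a fin_num) ->
  continuous (fun X => fine (rho M pi A X)) ->
  (* no scalable good deals *)
  asym_cone A `&` kerM M pi = [set 0] ->
  forall X, optR M pi A X !=set0.
Proof.
move=> _ _ _ [M0 HMlin] [b [Hind HMspan]] _ Hlin _ Acl _ _ _ Hfin _ Hcone X.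
pose g (c : 'rV[R]_n) : E := \sum_(i < n) c ord0 i *: b i.
pose f (c : 'rV[R]_n) : R := \sum_(i < n) c ord0 i * pi (b i).
have Mb : forall i, M (b i).
  move=> i; rewrite HMspan; exists (fun j => (j == i)%:R) => //.
  rewrite (bigD1 i) //= eqxx scale1r big1 ?addr0 // => j /negbTE ->.
  by rewrite scale0r.
have pi0 : pi 0 = 0.
  have := Hlin 1 0 0 M0 M0; rewrite scale1r addr0 mul1r => h.
  have : pi 0 + pi 0 = pi 0 + 0 by rewrite addr0 -h.
  by move/addrI.
have Hgf : forall c, M (g c) /\ pi (g c) = f c.
  move=> c; rewrite /g /f.
  apply: (big_rec2 (fun y1 y2 => M y1 /\ pi y1 = y2)) => // i y1 y2 _ [My1 <-].
  by split; [exact: HMlin | exact: Hlin].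
have Hspan : forall Z, M Z -> exists c, g c = Z.
  move=> Z; rewrite HMspan => -[c _ <-]; exists (\row_i c i).
  by rewrite /g; apply: eq_bigr => i _; rewrite mxE.
have Hg0 : forall c, g c = 0 -> c = 0.
  move=> c /Hind h; apply/rowP => i; rewrite mxE; exact: h.
have gZ : forall t c, g (t *: c) = t *: g c.
  move=> t c; rewrite /g scaler_sumr; apply: eq_bigr => i _.
  by rewrite mxE scalerA.
have fZ : forall t c, f (t *: c) = t * f c.
  move=> t c; rewrite /f mulr_sumr; apply: eq_bigr => i _.
  by rewrite mxE mulrA.
have gc : continuous g.
  have H := @cont_sum _ E _ (index_enum 'I_n) (fun (i:'I_n) (c:'rV[R]_n) => c ord0 i *: b i).
  apply: H => i.
  apply: cont_scale; [exact: coord_continuous | exact: cst_continuous].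
have fc : continuous f.
  have H := @cont_sum _ R^o _ (index_enum 'I_n) (fun (i:'I_n) (c:'rV[R]_n) => (c ord0 i *: (pi (b i) : R^o) : R^o)).
  apply: H => i.
  apply: cont_scale; [exact: coord_continuous | exact: cst_continuous].
set r := fine (rho M pi A X).
have rE : rho M pi A X = r%:E by rewrite /r fineK //; exact: Hfin.
have lbound : forall c, A (X + g c) -> r <= f c.
  move=> c Ac.
  have : (rho M pi A X <= (pi (g c))%:E)%E.
    by apply: ereal_inf_lbound; exists (g c) => //; split => //; exact: (Hgf c).1.
  by rewrite rE lee_fin (Hgf c).2.
have approx : forall e, 0 < e -> exists c, A (X + g c) /\ f c < r + e.
  move=> e e0.
  have : (rho M pi A X < (r + e)%:E)%E by rewrite rE lte_fin ltrDl.
  move=> /ereal_inf_lt [_ [Z [MZ AZ] <-]]; rewrite lte_fin => lt.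
  have [c gcZ] := Hspan Z MZ.
  by exists c; rewrite gcZ; split => //; rewrite -(Hgf c).2 gcZ.
have /choice [c Hc] : forall k : nat, exists c, A (X + g c) /\ f c < r + k.+1%:R^-1.
  by move=> k; apply: approx; rewrite invr_gt0 ltr0n.
suff [l [Al fl]] : exists l, A (X + g l) /\ f l <= r.
  exists (g l); split; first exact: (Hgf l).1.
  split => //; rewrite rE (Hgf l).2; congr (_%:E).
  by apply/eqP; rewrite eq_le fl lbound.
have hcl : forall (K : R), closed [set v : 'rV[R]_n | `|v| <= K].
  move=> K.
  have h := @preimage_closed 'rV[R]_n R (fun v => `|v|) [set x : R | x <= K].
  apply: h; last exact: closed_le.
  by move=> v _; exact: norm_continuous.
have hbd := @bd_ball R n.
case: (pselect (exists K, forall k, `|c k| <= K)) => [[K HK]|nb].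
  have Kc : compact [set v : 'rV[R]_n | `|v| <= K].
    by apply: bounded_closed_compact; [exact: hbd | exact: hcl].
  have [l [_ cll]] : [set v : 'rV[R]_n | `|v| <= K] `&` cluster (c @ \oo) !=set0.
    by apply: Kc; exists 0%N => // k _; exact: HK.
  exists l; split.
    apply: (@cluster_closed _ _ c l (fun v => X + g v) A (fun=> True) cll) => //.
      by apply: cont_add => //; exact: cst_continuous.
      by exists 0%N.
    by move=> k _; exact: (Hc k).1.
  apply/ler_addgt0Pr => e e0.
  apply: (@cluster_closed _ _ c l f [set x : R | x <= r + e] (fun k => k.+1%:R^-1 < e) cll) => //.
    exact: (near_infty_natSinv_lt (PosNum e0)).
  move=> k ke /=; apply/ltW/(lt_trans (Hc k).2).
  by rewrite ltrD2l.
have /choice [psi Hpsi] : forall m : nat, exists k, m%:R < `|c k|.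
  move=> m; apply: contra_notP nb => h; exists m%:R => k.
  by rewrite leNgt; apply/negP => hk; apply: h; exists k.
pose e m := c (psi m).
have epos : forall m, 0 < `|e m| by move=> m; exact: le_lt_trans (ler0n _ m) (Hpsi m).
pose d m := `|e m|^-1 *: e m.
have dn : forall m, `|d m| = 1.
  by move=> m; rewrite /d normrZ normfV normr_id mulVf // gt_eqF.
have hcl1 : closed [set v : 'rV[R]_n | `|v| = 1].
  have h := @preimage_closed 'rV[R]_n R (fun v => `|v|) [set x : R | x = 1].
  apply: h; last exact: closed_eq.
  by move=> v _; exact: norm_continuous.
have S1c : compact [set v : 'rV[R]_n | `|v| = 1].
  apply: (subclosed_compact hcl1 (B := [set v : 'rV[R]_n | `|v| <= 1])) => //.
    by apply: bounded_closed_compact; [exact: hbd | exact: hcl].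
  by move=> v /= ->.
have [dl [dl1 cld]] : [set v : 'rV[R]_n | `|v| = 1] `&` cluster (d @ \oo) !=set0.
  by apply: S1c; exists 0%N => // m _; exact: dn.
pose W := g dl.
have W0 : W <> 0.
  move=> hW; have dl0 := Hg0 _ hW.
  have : `|dl| == 0 by rewrite normr_eq0 dl0.
  by rewrite dl1 oner_eq0.
have fd : f dl = 0.
  apply/eqP; rewrite -normr_le0; apply/ler_addgt0Pr => eps eps0; rewrite add0r.
  apply: (@cluster_closed _ _ d dl (fun v => `|f v|) [set x : R | x <= eps] (fun m => (`|r| + 1) / eps < m%:R) cld).
  - by move=> v; apply: continuous_comp; [exact: fc | exact: norm_continuous].
  - exact: closed_le.
  - exact: nbhs_infty_gtr.
  move=> m hm /=; rewrite /d fZ normrM normfV normr_id mulrC ler_pdivrMr //.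
  have hf : `|f (e m)| <= `|r| + 1.
    have h1 := lbound (e m) (Hc (psi m)).1.
    have h2 := (Hc (psi m)).2.
    have h3 : (psi m).+1%:R^-1 <= 1 :> R by rewrite invf_le1 // ?ler1n // ltr0n.
    by rewrite /e; exact: (arith h1 h2 h3).
  have hm2 := lt_trans hm (Hpsi m).
  rewrite ltr_pdivrMr // in hm2.
  by apply: (le_trans hf); apply: ltW; rewrite mulrC.
have Wcone : asym_cone A W.
  move=> eps /= eps0 B nB.
  pose Phi (z : R^o * 'rV[R]_n) : E := z.1 *: X + g z.2.
  have Phic : continuous Phi.
    rewrite /Phi; apply: cont_add.
      apply: (@cont_scale R _ E (fun z : R^o * 'rV[R]_n => z.1) (fun=> X)).
        by move=> z; exact: cvg_fst.
      exact: cst_continuous.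
    move=> z; apply: (@continuous_comp _ _ _ (fun z : R^o * 'rV[R]_n => z.2) g).
      exact: cvg_snd.
    exact: gc.
  have PhiW : Phi (0, dl) = W by rewrite /Phi /= scale0r add0r.
  have nP : nbhs ((0 : R^o), dl) (Phi @^-1` B) by apply: Phic; rewrite PhiW.
  move: nP => [[A1 A2] /= [nA1 nA2] sub].
  move: nA1 => /nbhs_ballP [del /= del0 hdel].
  have [m [hm A2m]] := cluster_seq cld (nbhs_infty_gtr (Num.max del^-1 eps^-1)) nA2.
  have tpos : 0 < `|e m|^-1 by rewrite invr_gt0.
  have hm2 := lt_trans hm (Hpsi m).
  rewrite gt_max in hm2; move/andP: hm2 => [hd he].
  exists (`|e m|^-1 *: (X + g (e m))); split.
    exists `|e m|^-1, (X + g (e m)); split; last by split => //; exact: (Hc (psi m)).1.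
    apply/andP; split; first exact: ltW.
    by rewrite invf_ple ?posrE // ltW.
  have : (A1 `*` A2) (`|e m|^-1, d m).
    rewrite /setX /=.
    split; last exact: A2m; apply: hdel.
    rewrite /ball /= sub0r normrN ger0_norm ?ltW //.
    by rewrite invf_plt ?posrE.
  move=> /sub; rewrite /Phi /= /d gZ scalerDr //.
have : (asym_cone A `&` kerM M pi) W.
  split => //; split; first exact: (Hgf dl).1.
  by rewrite (Hgf dl).2; exact: fd.
by rewrite Hcone => /= hW0; exfalso; exact: W0.
Qed.
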